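(* Let $(X,r)$ be a non-degenerate involutive set-theoretic solution with $X=\{1,\dots,n\}$, $r(i,j)=(\sigma_i(j),\gamma_j(i))$, let $V$ be the vector space with basis $v_1,\dots,v_n$ and $c\in\mathrm{End}(V\otimes V)$ the operator $c(v_i\otimes v_j)=v_{\sigma_i(j)}\otimes v_{\gamma_j(i)}$. Then the algebra $A(c)$ is the quotient of the free algebra $F$ generated by $\{T_i^k: 1\le i,k\le n\}$ by the two-sided ideal $I(c)$ generated by all the elements $$C_{ij}^{kl}=T_{\sigma_i(j)}^{k}T_{\gamma_j(i)}^{l}-T_i^{\sigma_k(l)}T_j^{\gamma_l(k)},$$ and in particular $$C_{\sigma_i(j)\gamma_j(i)}^{kl}=T_i^kT_j^l-T_{\sigma_i(j)}^{\sigma_k(l)}T_{\gamma_j(i)}^{\gamma_l(k)}$$ (where $C_{\sigma_i(j)\gamma_j(i)}^{kl}$ denotes $C_{ab}^{kl}$ with $a=\sigma_i(j)$, $b=\gamma_j(i)$). Furthermore: (i) $C_{\sigma_i(j)\gamma_j(i)}^{\sigma_k(l)\gamma_l(k)}=-C_{ij}^{kl}$; (ii) $C_{ij}^{\sigma_k(l)\gamma_l(k)}=-C_{\sigma_i(j)\gamma_j(i)}^{kl}$; (iii) if $r(i,j)=(i,j)$, then $C_{ij}^{\sigma_k(l)\gamma_l(k)}=\pm C_{ij}^{kl}$; (iv) if $r(k,l)=(k,l)$, then $C_{\sigma_i(j)\gamma_j(i)}^{kl}=\pm C_{ij}^{kl}$; (v) if $r(i,j)=(i,j)$ and $r(k,l)=(k,l)$,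 then $C_{ij}^{kl}=0$; (vi) there are $\binom{n^2}{2}$ elements in the set $\{C_{ij}^{kl}\}/\pm$.
   Context: A set-theoretic solution of the Yang–Baxter equation is $r:X\times X\to X\times X$, $r(x,y)=(\sigma_x(y),\gamma_y(x))$, with $r^{12}r^{23}r^{12}=r^{23}r^{12}r^{23}$; non-degenerate means all $\sigma_x,\gamma_x$ bijective, involutive means $r\circ r=\mathrm{Id}$. FRT construction: for $c\in\mathrm{End}(V\otimes V)$ with coefficients defined by $c(v_i\otimes v_j)=\sum_{p,q}c_{ij}^{pq}v_p\otimes v_q$, the algebra $A(c)$ is defined as the quotient of the free algebra generated by $\{T_i^k:1\le i,k\le n\}$ by the two-sided ideal $I(c)$ generated by all elements $C_{ij}^{kl}=\sum_{p,q}c_{ij}^{pq}T_p^kT_q^l-\sum_{p,q}T_i^pT_j^q\,c_{pq}^{kl}$, with $i,j,k,l$ ranging over $\{1,\dots,n\}$. *)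

(* Defs.v *)
From HB Require Import structures.
From mathcomp Require Import all_boot all_order all_algebra.
From mathcomp.multinomials Require Import monalg.

Set Implicit Arguments.
Unset Strict Implicit.
Unset Printing Implicit Defensive.

Import GRing.Theory.
Local Open Scope ring_scope.

Section Solutions.
Variable n : nat.
Notation X := 'I_n.

(* r(x,y) = (sigma_x(y), gamma_y(x)); sigma x = sigma_x, gamma y = gamma_y *)
Definition rmap (sigma gamma : X -> X -> X) (p : X * X) : X * X :=
  (sigma p.1 p.2, gamma p.2 p.1).

Definition r12 sigma gamma (t : X * X * X) : X * X * X :=
  let: (x, y, z) := t in let: (a, b) := rmap sigma gamma (x, y) in (a, b, z).
Definition r23 sigma gamma (t : X * X * X) : X * X * X :=
  let: (x, y, z) := t in let: (a, b) := rmap sigma gamma (y, z) in (x, a, b).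

Definition is_YB_solution sigma gamma : Prop :=
  forall t, r12 sigma gamma (r23 sigma gamma (r12 sigma gamma t))
          = r23 sigma gamma (r12 sigma gamma (r23 sigma gamma t)).

Definition non_degenerate (sigma gamma : X -> X -> X) : Prop :=
  forall x, bijective (sigma x) /\ bijective (gamma x).

Definition involutive_sol sigma gamma : Prop :=
  forall p, rmap sigma gamma (rmap sigma gamma p) = p.
End Solutions.

Section FRT.
Variables (K : fieldType) (n : nat).
Notation X := 'I_n.

(* The free algebra F over K generated by the T_i^k, 1 <= i,k <= n:
   the monoid algebra of the free monoid on the index pairs (i,k). *)
Definition FreeAlg := {malg K[{fmonom (X * X)%type}]}.

Definition Tgen (i k : X) : FreeAlg := << fmu (i, k) >>.

(* Coefficients c_{ij}^{pq} of an endomorphism c of V (x) V in the basis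
   v_p (x) v_q : c(v_i (x) v_j) = sum_{p,q} c_{ij}^{pq} v_p (x) v_q. *)
Definition coefs := X -> X -> X -> X -> K.

Definition FRT_C (c : coefs) (i j k l : X) : FreeAlg :=
  \sum_(p < n) \sum_(q < n) (c i j p q) *: (Tgen p k * Tgen q l)
  - \sum_(p < n) \sum_(q < n) (c p q k l) *: (Tgen i p * Tgen j q).

Definition sol_coefs (sigma gamma : X -> X -> X) : coefs :=
  fun i j p q => ((p == sigma i j) && (q == gamma j i))%:R.

(* The set {C_{ij}^{kl}} taken up to sign, nonzero elements only:
   the set of classes {x, -x} for x ranging over the nonzero C_{ij}^{kl}. *)
Definition sign_classes (C : X -> X -> X -> X -> FreeAlg) :
    {set {set (X * X * (X * X))%type}} :=
  [set [set t : X * X * (X * X) |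
          (C t.1.1 t.1.2 t.2.1 t.2.2 == C s.1.1 s.1.2 s.2.1 s.2.2)
       || (C t.1.1 t.1.2 t.2.1 t.2.2 == - C s.1.1 s.1.2 s.2.1 s.2.2)]
     | s : X * X * (X * X) & C s.1.1 s.1.2 s.2.1 s.2.2 != 0].
End FRT.

(* Main.v *)
Require Import Defs.
From HB Require Import structures.
From mathcomp Require Import all_boot all_order all_algebra.
From mathcomp.multinomials Require Import monalg.
From mathcomp Require Import zify.
Import GRing.Theory.
Local Open Scope ring_scope.

Set Implicit Arguments.
Unset Strict Implicit.

Section Aux.
Variables (K : fieldType) (n : nat) (sigma gamma : 'I_n -> 'I_n -> 'I_n).
Hypothesis INV : involutive_sol sigma gamma.
Hypothesis ND : non_degenerate sigma gamma.
Notation X := 'I_n.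
Notation rm := (rmap sigma gamma).
Notation FA := (FreeAlg K n).

Definition wd (q : (X * X) * (X * X)) : {fmonom (X * X)%type} :=
  mmul (fmu (q.1.1, q.2.1)) (fmu (q.1.2, q.2.2)).

Lemma wd_inj : injective wd.
Proof.
move=> [[a b][c d]] [[a' b'][c' d']] /(congr1 (@fmonom_val _)).
by rewrite /wd !fmM !fmU /= => -[-> -> -> ->].
Qed.

Lemma TT a b c d : Tgen K a c * Tgen K b d = << wd ((a, b), (c, d)) >> :> FA.
Proof. by rewrite /Tgen malgM_def fgmulUU mulr1. Qed.

Lemma sum_delta (F : X -> X -> FA) a b :
  \sum_(p < n) \sum_(q < n) ((p == a) && (q == b))%:R *: F p q = F a b.
Proof.
rewrite (bigD1 a) //= [X in _ + X]big1 ?addr0; last first.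
  move=> p /negbTE pa.
  by rewrite big1 // => q _; rewrite pa /= scale0r.
rewrite (bigD1 b) //= [X in _ + X]big1 ?addr0 ?eqxx ?scale1r //.
by move=> q /negbTE qb; rewrite qb andbF scale0r.
Qed.

Lemma rmK : involutive rm.
Proof. exact: INV. Qed.

Lemma swap_eq k l p q :
  ((k == sigma p q) && (l == gamma q p)) = ((p == sigma k l) && (q == gamma l k)).
Proof.
have E x y : (rm x == y) = (x == rm y).
  by apply/eqP/eqP => [<-|->]; rewrite rmK.
rewrite [k == _]eq_sym [l == _]eq_sym.
by have := E (p, q) (k, l); rewrite /rmap /= !xpair_eqE.
Qed.

Lemma Cform1 i j k l :
  FRT_C (@sol_coefs K n sigma gamma) i j k l =
  Tgen K (sigma i j) k * Tgen K (gamma j i) l - Tgen K i (sigma k l) * Tgen K j (gamma l k).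
Proof.
rewrite /FRT_C /sol_coefs.
have := (sum_delta (fun p q => Tgen K p k * Tgen K q l) (sigma i j) (gamma j i)) => E1.
have E2 : \sum_(p < n) \sum_(q < n) ((k == sigma p q) && (l == gamma q p))%:R *: (Tgen K i p * Tgen K j q) = Tgen K i (sigma k l) * Tgen K j (gamma l k).
  rewrite -(sum_delta (fun p q => Tgen K i p * Tgen K j q)).
  by apply: eq_bigr => p _; apply: eq_bigr => q _; rewrite swap_eq.
exact: (f_equal2 (fun x y => x - y) E1 E2).
Qed.

Lemma sigK i j : sigma (sigma i j) (gamma j i) = i.
Proof. by have := INV (i, j); rewrite /rmap /= => -[]. Qed.
Lemma gamK i j : gamma (gamma j i) (sigma i j) = j.
Proof. by have := INV (i, j); rewrite /rmap /= => -[]. Qed.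


Definition rho (u : (X * X) * (X * X)) := (rm u.1, rm u.2).
Definition G (u : (X * X) * (X * X)) : FA := << wd u >> - << wd (rho u) >>.
Definition A (t : (X * X) * (X * X)) := (rm t.1, t.2).

Lemma rhoK : involutive rho.
Proof. by move=> [p q]; rewrite /rho /= !rmK. Qed.

Lemma A_inj : injective A.
Proof.
move=> [p1 q1] [p2 q2] E; have E1 := congr1 fst E; have E2 := congr1 snd E.
by rewrite /A /= in E1 E2; rewrite (inv_inj rmK E1) E2.
Qed.

Lemma coefG u z : (G u)@_(wd z) = (u == z)%:R - (rho u == z)%:R.
Proof. by rewrite /G mcoeffB !mcoeffU1 !(inj_eq wd_inj). Qed.

Lemma G_rho u : G (rho u) = - G u.
Proof. by rewrite /G rhoK opprB. Qed.

Lemma G0 u : (G u == 0) = (rho u == u).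
Proof.
apply/eqP/eqP => [H|H]; last by rewrite /G H subrr.
apply/eqP; apply/negPn/negP => Hu.
have := congr1 (mcoeff (wd u)) H; rewrite coefG mcoeff0 eqxx (negbTE Hu) subr0.
by move/eqP; rewrite oner_eq0.
Qed.

Lemma G_pm u v : G u != 0 ->
  (G v == G u) || (G v == - G u) = (v \in [set u; rho u]).
Proof.
move=> Gu; apply/idP/idP; last first.
  by rewrite !inE => /orP[/eqP->|/eqP->]; [rewrite eqxx | rewrite G_rho eqxx orbT].
move=> H; rewrite !inE; apply/negPn/negP => Hv.
have Gv : G v != 0.
  by case/orP: H => /eqP->; rewrite ?oppr_eq0.
have c : (G v)@_(wd v) = 1.
  by rewrite coefG eqxx; move: Gv; rewrite G0 => /negbTE ->; rewrite subr0.
have [uv rv] : (u == v) = false /\ (rho u == v) = false.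
  by move: Hv; rewrite ![v == _]eq_sym; case: (u == v); case: (rho u == v).
case/orP: H => /eqP E; move: c; rewrite E ?mcoeffN coefG uv rv subr0 ?oppr0;
  by move/eqP; rewrite eq_sym oner_eq0.
Qed.

Lemma fixed_rm x y : sigma x y = x -> rm (x, y) = (x, y).
Proof.
move=> H; have h2 := INV (x, y); rewrite /rmap /= H in h2.
case: h2 => h3 h4.
case: (ND x) => [[g gK _] _].
have : gamma y x = y by apply: (can_inj gK); rewrite h3 H.
by rewrite /rmap /= H => ->.
Qed.

Lemma cardF : #|[set p : X * X | rm p == p]| = n.
Proof.
set F := [set p : X * X | rm p == p].
have inF p : p \in F -> sigma p.1 p.2 = p.1.
  by rewrite inE => /eqP; case: p => a b; rewrite /rmap /= => -[].
rewrite -(card_in_imset (f := fst)); last first.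
  move=> [a b] [a' b'] /inF /= Hp /inF /= Hq /= E; subst a'.
  case: (ND a) => [[g gK _] _].
  by congr (_, _); apply: (can_inj gK); rewrite Hp Hq.
have -> : [set p.1 | p in F] = [set: X]; last by rewrite cardsT card_ord.
apply/setP => x; rewrite inE; apply/imsetP.
case: (ND x) => [[g _ gK] _].
exists (x, g x) => //.
by rewrite inE fixed_rm ?gK.
Qed.


Lemma CG (t : (X * X) * (X * X)) :
  FRT_C (@sol_coefs K n sigma gamma) t.1.1 t.1.2 t.2.1 t.2.2 = G (A t).
Proof.
case: t => [[i j] [k l]] /=.
rewrite Cform1 !TT /G /A /rho /= rmK.
by [].
Qed.

Lemma count_classes (C : X -> X -> X -> X -> FA) :
  (forall t, C t.1.1 t.1.2 t.2.1 t.2.2 = G (A t)) ->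
  #|sign_classes C| = 'C(n ^ 2, 2).
Proof.
move=> HC.
set D := [set t : (X * X) * (X * X) | C t.1.1 t.1.2 t.2.1 t.2.2 != 0].
set R : rel ((X * X) * (X * X)) := fun s t =>
  (C t.1.1 t.1.2 t.2.1 t.2.2 == C s.1.1 s.1.2 s.2.1 s.2.2)
  || (C t.1.1 t.1.2 t.2.1 t.2.2 == - C s.1.1 s.1.2 s.2.1 s.2.2).
have RG s t : s \in D -> R s t = (A t \in [set A s; rho (A s)]).
  by rewrite inE /R !HC; exact: G_pm.
have RD s t : s \in D -> R s t -> t \in D.
  rewrite /R !inE => Ds /orP[/eqP->|/eqP->] //; by rewrite oppr_eq0.
have eqR : {in D & &, equivalence_rel R}.
  move=> x y z Dx Dy Dz; split; first by rewrite /R eqxx.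
  rewrite /R => /orP[/eqP->|/eqP->]; first by [].
  by rewrite opprK orbC.
have key s t : s \in D -> ((t \in D) && R s t) = R s t.
  move=> Ds; case E : (R s t); last by rewrite andbF.
  by rewrite andbT; exact: (RD s t Ds E).
have SC : sign_classes C = equivalence_partition R D.
  apply/setP => S; apply/imsetP/imsetP.
    case=> s Ds ->; exists s.
      by move: Ds; rewrite !inE.
    apply/setP => t; rewrite [in RHS]in_set key; last by move: Ds; rewrite !inE.
    by rewrite in_set.
  case=> s Ds ->; exists s.
    by move: Ds; rewrite !inE.
  apply/setP => t; rewrite [in LHS]in_set key //.
  by rewrite in_set.
have PD : partition (sign_classes C) D by rewrite SC; exact: equivalence_partitionP.
have card2 B : B \in sign_classes C -> #|B| = 2%N.
  move=> /imsetP[s Ds ->].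
  have Ds' : s \in D by rewrite inE in Ds *.
  have -> : [set t | R s t] = A @^-1: [set A s; rho (A s)].
    by apply/setP => t; rewrite [in LHS]inE RG // [in RHS]inE.
  rewrite card_preimset; last exact: A_inj.
  rewrite cards2; congr (_.+1); apply/eqnP => /=.
  suff : A s != rho (A s) by move=> ->.
  by move: Ds'; rewrite inE HC G0 eq_sym.
have cardD : (#|D| + n * n = n * n * (n * n))%N.
  have CD : ~: D = setX [set p : X * X | rm p == p] [set p : X * X | rm p == p].
    apply/setP => t; rewrite !inE negbK HC G0.
    case: t => p q; rewrite /rho /A /= rmK xpair_eqE.
    by rewrite [p == _]eq_sym.
  by have := cardsC D; rewrite CD cardsX cardF !card_prod card_ord.
have := card_partition PD.
have -> : \sum_(B in sign_classes C) #|B| = \sum_(B in sign_classes C) 2%N.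
  by apply: eq_bigr => B /card2.
rewrite sum_nat_const => E; rewrite E in cardD.
rewrite bin2 -mulnn.
have h : (n * n * (n * n).-1 = (#|sign_classes C|).*2)%N.
  rewrite -mul2n; move: (n * n)%N cardD => N; case: N => [|N] /=; nia.
by rewrite h doubleK.
Qed.

End Aux.

Theorem lemma3p1 (K : fieldType) (n : nat) (sigma gamma : 'I_n -> 'I_n -> 'I_n) :
  is_YB_solution sigma gamma ->
  non_degenerate sigma gamma ->
  involutive_sol sigma gamma ->
  let C := FRT_C (@sol_coefs K n sigma gamma) in
  let T := @Tgen K n in
  (* the generators of I(c) *)
  (forall i j k l,
     C i j k l = T (sigma i j) k * T (gamma j i) l
                 - T i (sigma k l) * T j (gamma l k)) /\
  (forall i j k l,
     C (sigma i j) (gamma j i) k l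
     = T i k * T j l - T (sigma i j) (sigma k l) * T (gamma j i) (gamma l k)) /\
  (* (i) *)
  (forall i j k l,
     C (sigma i j) (gamma j i) (sigma k l) (gamma l k) = - C i j k l) /\
  (* (ii) *)
  (forall i j k l,
     C i j (sigma k l) (gamma l k) = - C (sigma i j) (gamma j i) k l) /\
  (* (iii) *)
  (forall i j k l, rmap sigma gamma (i, j) = (i, j) ->
     C i j (sigma k l) (gamma l k) = C i j k l \/
     C i j (sigma k l) (gamma l k) = - C i j k l) /\
  (* (iv) *)
  (forall i j k l, rmap sigma gamma (k, l) = (k, l) ->
     C (sigma i j) (gamma j i) k l = C i j k l \/
     C (sigma i j) (gamma j i) k l = - C i j k l) /\
  (* (v) *)
  (forall i j k l, rmap sigma gamma (i, j) = (i, j) ->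
     rmap sigma gamma (k, l) = (k, l) -> C i j k l = 0) /\
  (* (vi) *)
  #|sign_classes C| = 'C(n ^ 2, 2).
Proof.
move=> _ ND INV; cbv zeta.
have C1 := Cform1 K INV.
have sK := sigK INV; have gK := gamK INV.
split; first exact: C1.
split; first by move=> i j k l; rewrite C1 sK gK.
split; first by move=> i j k l; rewrite !C1 !sK !gK opprB.
split; first by move=> i j k l; rewrite !C1 !sK !gK opprB.
split.
  move=> i j k l; rewrite /rmap /= => -[hs hg]; right.
  by rewrite !C1 !sK !gK hs hg opprB.
split.
  move=> i j k l; rewrite /rmap /= => -[hs hg]; right.
  by rewrite !C1 !sK !gK hs hg opprB.
split.
  move=> i j k l; rewrite /rmap /= => -[hs hg] [hs' hg'].
  by rewrite !C1 hs hg hs' hg' subrr.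
exact: (count_classes INV ND (CG K INV)).
Qed.
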